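(* Consider the setting in the context, with strike $K\in(0,\infty)$. Let $\bar w=W\left(s_0e^{(\delta-\frac{\eta^2}{2})T}\eta^2T\lambda\gamma(1-\rho^2)\right)$ and suppose $$K\ge\frac1{\lambda\gamma(1-\rho^2)}\left(\frac{\bar w}{\eta^2T}+\frac{\bar w^2}{2\eta^2T}\right).$$ Then $p^{put}=D^{put}+A^{put}$, where $$D^{put}=\lambda e^{-rT}K-\frac{e^{-rT}}{\gamma(1-\rho^2)}\left(\frac{\bar w}{\eta^2T}+\frac{\bar w^2}{2\eta^2T}\right),\qquad A^{put}=\frac{e^{-rT}}{\gamma(1-\rho^2)}\ln\mathbb E(\psi_K(N)),$$ $$\psi_K(y)=\exp\left(-\frac{\bar w}{\eta^2T}\left(e^{\eta\sqrt Ty}-1-\eta\sqrt Ty\right)+\left(\frac{\bar w}{\eta^2T}e^{\eta\sqrt Ty}-\lambda\gamma(1-\rho^2)K\right)_+\right).$$ Moreover $V^{put}(x_0,s_0,\lambda,K)=V^{put}_D(x_0,s_0,\lambda,K)\,V^{put}_A(s_0,\lambda,K)$, where $$V^{put}_D(x_0,s_0,\lambda,K)=-\frac1\gamma\exp\left(-\gamma e^{rT}(x_0-D^{put})-\frac{(\mu-r)^2}{2\sigma^2}T\right),\qquad V^{put}_A(s_0,\lambda,K)=\exp\left(\gamma e^{rT}A^{put}\right).$$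
   Context: Fix $T>0$, $r,\nu,\mu,x_0\in\mathbb R$, $\eta>0$, $\sigma>0$, $\rho\in(-1,1)$, $s_0>0$, $\lambda>0$, $\gamma>0$; $N$ is a standard Gaussian random variable; $\delta=\nu-\eta\rho\frac{\mu-r}{\sigma}$; $W$ is the Lambert function (inverse of $x\in(-1,\infty)\mapsto xe^x$); $x_+=\max(x,0)$. (Model: non-traded asset $dS=S(\nu dt+\eta dZ)$, traded asset $dP=P(\mu dt+\sigma dB)$, correlation $\rho$, bond rate $r$, utility $-\frac1\gamma e^{-\gamma x}$; the agent is short $\lambda$ put options with payoff $(K-S_T)_+$.) The selling reservation price and the value function of this short put position are $$p^{put}=\frac{e^{-rT}}{\gamma(1-\rho^2)}\ln\mathbb E\exp\left(\lambda\gamma(1-\rho^2)\left(K-s_0e^{(\delta-\frac{\eta^2}{2})T}e^{\eta\sqrt TN}\right)_+\right),$$ $$V^{put}(x_0,s_0,\lambda,K)=-\frac1\gamma e^{-\gamma x_0e^{rT}-\frac{(\mu-r)^2}{2\sigma^2}T}\left(\mathbb E\exp\left(\lambda\gamma(1-\rho^2)\left(K-s_0e^{(\delta-\frac{\eta^2}{2})T}e^{\eta\sqrt TN}\right)_+\right)\right)^{\frac1{1-\rho^2}}.$$ *)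

(* Defs.v *)
From Stdlib Require Import Reals ClassicalEpsilon.
From Coquelicot Require Import Coquelicot.
Open Scope R_scope.

Definition pos_part (x : R) : R := Rmax x 0.

(* Lambert function: inverse of x in (-1,oo) |-> x e^x
   (defined, via choice, on its range (-1/e, oo); arbitrary elsewhere). *)
Definition LambertW (x : R) : R :=
  epsilon (inhabits 0) (fun w => -1 < w /\ w * exp w = x).

Definition gauss_density (y : R) : R := exp (- (y ^ 2) / 2) / sqrt (2 * PI).

Definition Egauss (f : R -> R) : R :=
  RInt_gen (fun y => f y * gauss_density y)
    (Rbar_locally m_infty) (Rbar_locally p_infty).

Definition delta (r nu mu eta sigma rho : R) : R :=
  nu - eta * rho * ((mu - r) / sigma).

Definition put_integrand (T r nu mu eta sigma rho s0 lam gam K : R) (y : R) : R :=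
  exp (lam * gam * (1 - rho ^ 2) *
       pos_part (K - s0 * exp ((delta r nu mu eta sigma rho - eta ^ 2 / 2) * T)
                       * exp (eta * sqrt T * y))).

Definition p_put (T r nu mu eta sigma rho s0 lam gam K : R) : R :=
  exp (- r * T) / (gam * (1 - rho ^ 2)) *
  ln (Egauss (put_integrand T r nu mu eta sigma rho s0 lam gam K)).

Definition V_put (T r nu mu eta sigma rho x0 s0 lam gam K : R) : R :=
  - / gam * exp (- gam * x0 * exp (r * T) - (mu - r) ^ 2 / (2 * sigma ^ 2) * T) *
  Rpower (Egauss (put_integrand T r nu mu eta sigma rho s0 lam gam K))
         (/ (1 - rho ^ 2)).

Definition wbar (T r nu mu eta sigma rho s0 lam gam : R) : R :=
  LambertW (s0 * exp ((delta r nu mu eta sigma rho - eta ^ 2 / 2) * T)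
            * eta ^ 2 * T * lam * gam * (1 - rho ^ 2)).

Definition D_put (T r nu mu eta sigma rho s0 lam gam K : R) : R :=
  let w := wbar T r nu mu eta sigma rho s0 lam gam in
  lam * exp (- r * T) * K -
  exp (- r * T) / (gam * (1 - rho ^ 2)) *
    (w / (eta ^ 2 * T) + w ^ 2 / (2 * eta ^ 2 * T)).

Definition psi_K (T r nu mu eta sigma rho s0 lam gam K : R) (y : R) : R :=
  let w := wbar T r nu mu eta sigma rho s0 lam gam in
  exp (- (w / (eta ^ 2 * T)) *
         (exp (eta * sqrt T * y) - 1 - eta * sqrt T * y) +
       pos_part (w / (eta ^ 2 * T) * exp (eta * sqrt T * y)
                 - lam * gam * (1 - rho ^ 2) * K)).

Definition A_put (T r nu mu eta sigma rho s0 lam gam K : R) : R :=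
  exp (- r * T) / (gam * (1 - rho ^ 2)) *
  ln (Egauss (psi_K T r nu mu eta sigma rho s0 lam gam K)).

Definition V_put_D (T r nu mu eta sigma rho x0 s0 lam gam K : R) : R :=
  - / gam * exp (- gam * exp (r * T) * (x0 - D_put T r nu mu eta sigma rho s0 lam gam K)
                 - (mu - r) ^ 2 / (2 * sigma ^ 2) * T).

Definition V_put_A (T r nu mu eta sigma rho s0 lam gam K : R) : R :=
  exp (gam * exp (r * T) * A_put T r nu mu eta sigma rho s0 lam gam K).

(* Main.v *)
Require Import Defs.
From Stdlib Require Import Reals Lra Classical ClassicalEpsilon.
From Coquelicot Require Import Coquelicot.
Open Scope R_scope.
Lemma lambert_spec (x : R) : 0 < x -> -1 < LambertW x /\ LambertW x * exp (LambertW x) = x.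
Proof.
  intros hx. unfold LambertW.
  apply epsilon_spec.
  assert (Hc : forall y : R_UniformSpace, continuous (fun w => w * exp w) y).
  { intros y. apply (continuous_mult (fun w : R => w) exp). apply continuous_id. apply continuous_exp. }
  assert (H1 : x <= x * exp x).
  { assert (1 <= exp x). { rewrite <- exp_0. apply exp_le_3 || (left; apply exp_increasing; lra). }
    nra. }
  destruct (IVT_gen_consistent (fun w => w * exp w) 0 x x Hc) as [w [Hw1 Hw2]].
  { rewrite Rmin_left, Rmax_right; rewrite ?Rmult_0_l; try lra; nra. }
  exists w. split; [|exact Hw2]. rewrite Rmin_left in Hw1 by lra. lra.
Qed.

Lemma shift_gen (F : R -> R) v l :
  is_RInt_gen F (Rbar_locally m_infty) (Rbar_locally p_infty) l ->
  is_RInt_gen (fun y => F (y + v)) (Rbar_locally m_infty) (Rbar_locally p_infty) l.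
Proof.
  intros H P HP. destruct (H P HP) as [Q R0 HQ HR HQR].
  apply Filter_prod with (fun a => Q (a + v)) (fun b => R0 (b + v)).
  - destruct HQ as [M HM]. exists (M - v). intros x hx. apply HM. lra.
  - destruct HR as [M HM]. exists (M - v). intros x hx. apply HM. lra.
  - intros a b Qa Rb. destruct (HQR _ _ Qa Rb) as [y [Hy Py]]. exists y; split; auto.
    simpl in Hy |- *.
    apply is_RInt_ext with (fun t => scal 1 (F (1 * t + v))).
    { intros t _. rewrite Rmult_1_l. f_equal. ring. }
    assert (H' : is_RInt F (1 * a + v) (1 * b + v) y).
    { replace (1 * a + v) with (a + v) by ring. replace (1 * b + v) with (b + v) by ring. exact Hy. }
    exact (is_RInt_comp_lin F 1 v a b y H').
Qed.
Lemma pos_scale (c K X : R) : 0 < c ->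
  c * pos_part (K - X) = pos_part (c * X - c * K) + c * K - c * X.
Proof.
  intros hc. unfold pos_part, Rmax.
  destruct (Rle_dec (K - X) 0); destruct (Rle_dec (c * X - c * K) 0); nra.
Qed.

Lemma exp3 (x y z S : R) : S <> 0 -> exp x * (exp y * (exp z / S)) = exp (x + y + z) / S.
Proof. intros. rewrite !exp_plus. field. auto. Qed.

Lemma exp2 (x y S : R) : S <> 0 -> exp x * (exp y / S) = exp (x + y) / S.
Proof. intros. rewrite !exp_plus. field. auto. Qed.

Lemma ptw (c a0 w eta T K u : R) : 0 < T -> 0 < eta -> 0 < c ->
  w * exp w = a0 * eta ^ 2 * T * c ->
  exp (- (c * K - (w / (eta ^ 2 * T) + w ^ 2 / (2 * eta ^ 2 * T)))) *
   (exp (c * pos_part (K - a0 * exp (eta * sqrt T * (u + - (w / (eta * sqrt T))))))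
    * (exp (- ((u + - (w / (eta * sqrt T))) ^ 2) / 2) / sqrt (2 * PI)))
  = exp (- (w / (eta ^ 2 * T)) * (exp (eta * sqrt T * u) - 1 - eta * sqrt T * u) +
         pos_part (w / (eta ^ 2 * T) * exp (eta * sqrt T * u) - c * K))
    * (exp (- (u ^ 2) / 2) / sqrt (2 * PI)).
Proof.
  intros hT heta hc Hw.
  assert (hq : 0 < sqrt T) by (apply sqrt_lt_R0; lra).
  assert (hS : sqrt (2 * PI) <> 0).
  { apply Rgt_not_eq. apply sqrt_lt_R0. pose proof PI_RGT_0. lra. }
  assert (hew : 0 < exp w) by apply exp_pos.
  assert (e1 : exp (eta * sqrt T * (u + - (w / (eta * sqrt T)))) = exp (eta * sqrt T * u) * / exp w).
  { rewrite <- exp_Ropp, <- exp_plus. f_equal. field. split; lra. }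
  rewrite e1, pos_scale by auto.
  assert (e2 : c * (a0 * (exp (eta * sqrt T * u) * / exp w)) = w / (eta ^ 2 * T) * exp (eta * sqrt T * u)).
  { assert (ha : a0 = w * exp w / (eta ^ 2 * T * c)).
    { rewrite Hw. field. repeat split; try lra. }
    rewrite ha. field. repeat split; lra. }
  rewrite e2, exp3, exp2 by auto.
  f_equal. f_equal.
  set (q := sqrt T) in *.
  assert (HT : T = q * q) by (unfold q; rewrite sqrt_sqrt; lra).
  clearbody q. subst T. field. split; lra.
Qed.
Lemma pos_continuous (h : R -> R) x : continuous h x -> continuous (fun y => pos_part (h y)) x.
Proof.
  intros H.
  apply (continuous_ext (fun y => (h y + Rabs (h y)) / 2)).
  { intros y. unfold pos_part, Rmax. destruct (Rle_dec (h y) 0).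
    rewrite Rabs_left1 by lra. lra. rewrite Rabs_right by lra. lra. }
  apply (continuous_mult (fun y => h y + Rabs (h y)) (fun _ => / 2)).
  apply (continuous_plus h (fun y => Rabs (h y))). exact H. apply continuous_Rabs_comp; exact H.
  apply continuous_const.
Qed.

Lemma g1_cont (c a0 z K : R) x :
  continuous (fun y => exp (c * pos_part (K - a0 * exp (z * y))) * (exp (- (y ^ 2) / 2) / sqrt (2 * PI))) x.
Proof.
  apply (continuous_mult (fun y => exp (c * pos_part (K - a0 * exp (z * y))))
                         (fun y => exp (- (y ^ 2) / 2) / sqrt (2 * PI))).
  - apply continuous_exp_comp.
    apply (continuous_mult (fun _ => c) (fun y => pos_part (K - a0 * exp (z * y)))).
    apply continuous_const.
    apply pos_continuous. apply (@ex_derive_continuous R_AbsRing R_NormedModule). auto_derive. auto.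
  - apply (@ex_derive_continuous R_AbsRing R_NormedModule). auto_derive. auto.
Qed.

Lemma gauss_le (y : R) : exp (- (y ^ 2) / 2) <= 2 * / (1 + y ^ 2).
Proof.
  assert (h := exp_ineq1_le (y ^ 2 / 2)).
  replace (- (y ^ 2) / 2) with (- (y ^ 2 / 2)) by field.
  rewrite exp_Ropp.
  assert (0 <= y ^ 2) by nra.
  replace (2 * / (1 + y ^ 2)) with (/ ((1 + y ^ 2) / 2)) by (field; lra).
  apply Rinv_le_contravar; lra.
Qed.

Lemma gen_int (g : R -> R) (B : R) :
  (forall x, continuous g x) -> (forall x, 0 <= g x) ->
  (forall a b, a <= b -> RInt g a b <= B) ->
  exists l, is_RInt_gen g (Rbar_locally m_infty) (Rbar_locally p_infty) l /\ RInt g 0 1 <= l.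
Proof.
  intros Hc Hp HB.
  assert (Hex : forall a b, ex_RInt g a b) by (intros; apply (@ex_RInt_continuous R_CompleteNormedModule); auto).
  set (E := fun v => exists a b, a <= b /\ v = RInt g a b).
  destruct (completeness E) as [l [Hub Hlub]].
  { exists B. intros v [a [b [Hab ->]]]. auto. }
  { exists (RInt g 0 0). exists 0, 0. split; auto; lra. }
  assert (Hmono : forall a b a0 b0, a <= a0 -> a0 <= b0 -> b0 <= b -> RInt g a0 b0 <= RInt g a b).
  { intros a b a0 b0 h1 h2 h3.
    rewrite <- (RInt_Chasles g a a0 b) by auto.
    rewrite <- (RInt_Chasles g a0 b0 b) by auto.
    assert (0 <= RInt g a a0) by (apply RInt_ge_0; auto).
    assert (0 <= RInt g b0 b) by (apply RInt_ge_0; auto).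
    change plus with Rplus. lra. }
  exists l. split.
  2: { apply Hub. exists 0, 1. split; auto; lra. }
  intros P [eps Heps].
  destruct (classic (exists a0 b0, a0 <= b0 /\ l - eps < RInt g a0 b0)) as [[a0 [b0 [Hab Hlt]]]|Hn].
  2: { exfalso. assert (l <= l - eps).
       { apply Hlub. intros v [a [b [Hab ->]]].
         apply Rnot_lt_le. intros Hc'. apply Hn. exists a, b. auto. }
       destruct eps; simpl in *; lra. }
  apply Filter_prod with (fun a => a < a0) (fun b => b0 < b).
  - exists a0. auto.
  - exists b0. auto.
  - intros a b ha hb. exists (RInt g a b). split.
    + apply (@RInt_correct R_CompleteNormedModule). auto.
    + apply Heps. change (Rabs (RInt g a b - l) < eps).
      assert (RInt g a b <= l) by (apply Hub; exists a, b; split; auto; lra).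
      assert (RInt g a0 b0 <= RInt g a b) by (apply Hmono; lra).
      rewrite Rabs_left1 by lra. lra.
Qed.

Lemma g1_int (c a0 z K : R) : 0 < c -> 0 < a0 -> 0 < K ->
  exists l, 0 < l /\ is_RInt_gen
    (fun y => exp (c * pos_part (K - a0 * exp (z * y))) * (exp (- (y ^ 2) / 2) / sqrt (2 * PI)))
    (Rbar_locally m_infty) (Rbar_locally p_infty) l.
Proof.
  intros hc ha hK.
  set (g := fun y => exp (c * pos_part (K - a0 * exp (z * y))) * (exp (- (y ^ 2) / 2) / sqrt (2 * PI))).
  assert (hS : 0 < sqrt (2 * PI)) by (apply sqrt_lt_R0; pose proof PI_RGT_0; lra).
  assert (gpos : forall y, 0 < g y).
  { intros y. unfold g. apply Rmult_lt_0_compat. apply exp_pos.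
    apply Rdiv_lt_0_compat. apply exp_pos. auto. }
  set (M := exp (c * K) * 2 / sqrt (2 * PI)).
  set (h := fun y => M * / (1 + y ^ 2)).
  assert (gle : forall y, g y <= h y).
  { intros y. unfold g, h, M.
    assert (e1 : exp (c * pos_part (K - a0 * exp (z * y))) <= exp (c * K)).
    { assert (hp : pos_part (K - a0 * exp (z * y)) <= K).
      { unfold pos_part, Rmax. pose proof (exp_pos (z * y)).
        destruct (Rle_dec (K - a0 * exp (z * y)) 0); nra. }
      destruct (Req_dec (c * pos_part (K - a0 * exp (z * y))) (c * K)) as [E|E].
      rewrite E; lra. left. apply exp_increasing. nra. }
    pose proof (gauss_le y). pose proof (exp_pos (- (y ^ 2) / 2)). pose proof (exp_pos (c * pos_part (K - a0 * exp (z * y)))).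
    assert (0 < exp (c * K)) by apply exp_pos.
    assert (0 <= y ^ 2) by nra.
    unfold Rdiv. rewrite <- (Rmult_comm (/ sqrt (2 * PI))).
    replace (exp (c * K) * 2 * / sqrt (2 * PI) * / (1 + y ^ 2)) with
      (exp (c * K) * (/ sqrt (2 * PI) * (2 * / (1 + y ^ 2)))) by ring.
    apply Rmult_le_compat; try lra.
    apply Rmult_le_pos; [left; apply Rinv_0_lt_compat; auto| lra].
    apply Rmult_le_compat_l. left; apply Rinv_0_lt_compat; auto. auto. }
  assert (hcont : forall y, continuous h y).
  { intros y. apply (@ex_derive_continuous R_AbsRing R_NormedModule). unfold h. auto_derive. nra. }
  assert (hint : forall a b, is_RInt h a b (M * atan b - M * atan a)).
  { intros a b. apply (@is_RInt_derive R_CompleteNormedModule (fun y => M * atan y) h).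
    - intros x _. unfold h. apply is_derive_scal.
      replace (/ (1 + x ^ 2)) with (/ (1 + x²)) by (unfold Rsqr; f_equal; ring).
      apply is_derive_atan.
    - intros; auto. }
  assert (HM : 0 < M).
  { unfold M. apply Rdiv_lt_0_compat; [|auto]. pose proof (exp_pos (c*K)). lra. }
  destruct (gen_int g (M * PI)) as [l [Hl Hl1]].
  - intros x. apply g1_cont.
  - intros; left; auto.
  - intros a b hab.
    apply Rle_trans with (RInt h a b).
    + apply RInt_le; auto.
      apply (@ex_RInt_continuous R_CompleteNormedModule). intros; apply g1_cont.
      exists (M * atan b - M * atan a). auto.
      intros; auto.
    + rewrite (is_RInt_unique _ _ _ _ (hint a b)).
      pose proof (atan_bound a). pose proof (atan_bound b). nra.
  - exists l. split; auto.
    apply Rlt_le_trans with (RInt g 0 1); auto.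
    apply RInt_gt_0. lra. intros; auto. intros; apply g1_cont.
Qed.

Theorem theorem5 (T r nu mu x0 eta sigma rho s0 lam gam K : R)
  (hT : 0 < T) (heta : 0 < eta) (hsigma : 0 < sigma)
  (hrho : -1 < rho < 1) (hs0 : 0 < s0) (hlam : 0 < lam) (hgam : 0 < gam)
  (hK : 0 < K)
  (hKw : let w := wbar T r nu mu eta sigma rho s0 lam gam in
         / (lam * gam * (1 - rho ^ 2)) *
           (w / (eta ^ 2 * T) + w ^ 2 / (2 * eta ^ 2 * T)) <= K) :
  p_put T r nu mu eta sigma rho s0 lam gam K =
    D_put T r nu mu eta sigma rho s0 lam gam K +
    A_put T r nu mu eta sigma rho s0 lam gam K /\
  V_put T r nu mu eta sigma rho x0 s0 lam gam K =
    V_put_D T r nu mu eta sigma rho x0 s0 lam gam K *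
    V_put_A T r nu mu eta sigma rho s0 lam gam K.
Proof.
  clear hKw.
  assert (hr2 : 0 < 1 - rho ^ 2) by nra.
  assert (hc : 0 < lam * gam * (1 - rho ^ 2)).
  { apply Rmult_lt_0_compat; auto. apply Rmult_lt_0_compat; auto. }
  set (c := lam * gam * (1 - rho ^ 2)) in *.
  set (a0 := s0 * exp ((delta r nu mu eta sigma rho - eta ^ 2 / 2) * T)).
  assert (ha0 : 0 < a0) by (apply Rmult_lt_0_compat; auto; apply exp_pos).
  assert (Hw : wbar T r nu mu eta sigma rho s0 lam gam * exp (wbar T r nu mu eta sigma rho s0 lam gam)
               = a0 * eta ^ 2 * T * c).
  { unfold wbar. destruct (lambert_spec (s0 * exp ((delta r nu mu eta sigma rho - eta ^ 2 / 2) * T)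
            * eta ^ 2 * T * lam * gam * (1 - rho ^ 2))) as [_ E].
    { repeat apply Rmult_lt_0_compat; auto; try apply exp_pos; try nra. }
    rewrite E. unfold a0, c. ring. }
  set (w := wbar T r nu mu eta sigma rho s0 lam gam) in *.
  set (C := c * K - (w / (eta ^ 2 * T) + w ^ 2 / (2 * eta ^ 2 * T))).
  destruct (g1_int c a0 (eta * sqrt T) K hc ha0 hK) as [l [hl Hl]].
  assert (E1 : Egauss (put_integrand T r nu mu eta sigma rho s0 lam gam K) = l).
  { unfold Egauss. apply is_RInt_gen_unique. exact Hl. }
  assert (E2 : Egauss (psi_K T r nu mu eta sigma rho s0 lam gam K) = exp (- C) * l).
  { unfold Egauss. apply is_RInt_gen_unique.
    pose proof (shift_gen _ (- (w / (eta * sqrt T))) l Hl) as H1.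
    pose proof (is_RInt_gen_scal _ (exp (- C)) _ H1) as H2.
    eapply is_RInt_gen_ext; [| exact H2].
    apply Filter_prod with (fun _ => True) (fun _ => True).
    exists 0; auto. exists 0; auto.
    intros a b _ _ u _.
    change (exp (- C) * (exp (c * pos_part (K - a0 * exp (eta * sqrt T * (u + - (w / (eta * sqrt T))))))
            * (exp (- ((u + - (w / (eta * sqrt T))) ^ 2) / 2) / sqrt (2 * PI)))
         = psi_K T r nu mu eta sigma rho s0 lam gam K u * gauss_density u).
    unfold C. rewrite ptw by auto. reflexivity. }
  assert (HP : p_put T r nu mu eta sigma rho s0 lam gam K =
    D_put T r nu mu eta sigma rho s0 lam gam K + A_put T r nu mu eta sigma rho s0 lam gam K).
  { unfold p_put, A_put, D_put. fold w. rewrite E1, E2.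
    rewrite ln_mult, ln_exp by (auto; apply exp_pos).
    unfold C, c. field. split; lra. }
  split; [exact HP|].
  unfold V_put, V_put_D, V_put_A.
  rewrite (Rmult_assoc (- / gam) (exp _) (exp _)), <- exp_plus.
  replace (- gam * exp (r * T) * (x0 - D_put T r nu mu eta sigma rho s0 lam gam K) -
     (mu - r) ^ 2 / (2 * sigma ^ 2) * T + gam * exp (r * T) * A_put T r nu mu eta sigma rho s0 lam gam K)
   with (- gam * x0 * exp (r * T) - (mu - r) ^ 2 / (2 * sigma ^ 2) * T +
         gam * exp (r * T) * (D_put T r nu mu eta sigma rho s0 lam gam K + A_put T r nu mu eta sigma rho s0 lam gam K)) by ring.
  rewrite <- HP. unfold p_put, Rpower. rewrite Rmult_assoc, <- exp_plus. f_equal. f_equal.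
  replace (- r * T) with (- (r * T)) by ring. rewrite exp_Ropp.
  field. split; [apply Rgt_not_eq, exp_pos|]. repeat split; lra.
Qed.
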